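(* Let $\mathcal{S}$ be a countably intersected family of subsets of a set $\Gamma$. Every norm-bounded sequence $(\phi_n)_{n\in\mathbb{N}}$ in $J\mathcal{S}$ consisting of finitely supported functions has a subsequence $(\phi_n)_{n\in B}$ such that for every $s\in\mathcal{S}$ the sequence $(s^*(\phi_n))_{n\in B}$ is Cauchy, where $s^*(\phi)=\sum_{a\in s}\phi(a)$.
   Context: A family $\mathcal{S}$ of subsets of $\Gamma$ is countably intersected (C.I.) if: (a) $\mathcal{S}$ consists of countable subsets of $\Gamma$, contains all singletons, and is pointwise closed, i.e. $\{\chi_s : s\in\mathcal{S}\}$ is closed in $\{0,1\}^{\Gamma}$; (b) for all $s,t\in\mathcal{S}$, $s\setminus t$ is a finite union of pairwise disjoint elements of $\mathcal{S}$; (c) to every $t\in\mathcal{S}$ one can assign $s_t\in\mathcal{S}$ with $t\subseteq s_t$ such that for all $s,t_1,\dots,t_n\in\mathcal{S}$ there exists $t\in\mathcal{S}$ with $t\subseteq s\setminus\bigcup_{i=1}^n s_{t_i}$ and $s\setminus\big(\bigcup_{i=1}^n s_{t_i}\cup t\big)$ finite; (d) for every $s\in\mathcal{S}$ the set $\{s\cap t: t\in\mathcal{S}\}$ is countable. For finitely supported $\phi:\Gamma\to\mathbb{R}$, $\|\phi\|=\sup\big(\sum_{i=1}^n(\sum_{a\in s_i}\phi(a))^2\big)^{1/2}$ over all finite families of pairwise disjoint $s_1,\dots,s_n\in\mathcal{S}$; $J\mathcal{S}$ is the completion of the finitely supported functions in this norm. *)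

(* Defs.v *)
From HB Require Import structures.
From mathcomp Require Import all_boot all_order all_algebra.
From mathcomp Require Import all_classical all_reals all_analysis.
Set Implicit Arguments. Unset Strict Implicit. Unset Printing Implicit Defensive.
Import Order.TTheory GRing.Theory Num.Theory.
Local Open Scope classical_set_scope.
Local Open Scope ring_scope.

Definition chi {G : Type} (s : set G) : G -> bool := fun a => `[< s a >].

Definition disj_family {G : Type} (S : set (set G)) (l : seq (set G)) : Prop :=
  (forall u, u \in l -> S u) /\
  (forall i j, (i < j < size l)%N -> nth set0 l i `&` nth set0 l j = set0).

Definition lunion {G : Type} (l : seq (set G)) : set G :=
  \big[setU/set0]_(u <- l) u.

Definition CI {G : Type} (S : set (set G)) : Prop :=
  [/\
      (forall s, S s -> countable s)
   /\ (forall x : G, S [set x])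
   /\ closed ((@chi G) @` S : set {ptws G -> bool}),
      (forall s t, S s -> S t -> exists l, disj_family S l /\ s `\` t = lunion l),
      (exists st : set G -> set G,
         (forall t, S t -> S (st t) /\ t `<=` st t) /\
         (forall s (ts : seq (set G)), S s -> (forall t, t \in ts -> S t) ->
            exists t, [/\ S t,
              t `<=` s `\` lunion (map st ts) &
              finite_set (s `\` (lunion (map st ts) `|` t))]))
    &
      (forall s, S s -> countable [set s `&` t | t in S])].

Definition sstar {R : realType} {G : choiceType} (s : set G) (phi : G -> R) : R :=
  \sum_(a \in s) phi a.

Definition JSnorm {R : realType} {G : choiceType} (S : set (set G)) (phi : G -> R)
  : \bar R :=
  ereal_sup [set (Num.sqrt (\sum_(u <- l) (sstar u phi) ^+ 2))%:E
             | l in disj_family S].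

Definition fin_supp {R : realType} {G : Type} (phi : G -> R) : Prop :=
  finite_set [set a | phi a != 0].

Definition cauchy_seq {R : realType} (u : nat -> R) : Prop :=
  forall e : R, 0 < e -> exists N : nat,
    forall m n, (N <= m)%N -> (N <= n)%N -> `|u m - u n| < e.

(* Main.v *)
Require Import Defs.
From HB Require Import structures.
From mathcomp Require Import all_boot all_order all_algebra.
From mathcomp Require Import all_classical all_reals all_analysis.
From mathcomp Require Import ring lra.
Import Order.TTheory GRing.Theory Num.Theory.
Local Open Scope classical_set_scope.
Local Open Scope ring_scope.
Set Implicit Arguments. Unset Strict Implicit. Unset Printing Implicit Defensive.

Definition infset (A : set nat) := forall N, exists m, A m /\ (N <= m)%N.
Definition evsub (B A : set nat) := exists N, forall m, B m -> (N <= m)%N -> A m.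
Definition cauchy_on {R : realType} (A : set nat) (f : nat -> R) :=
  forall e : R, 0 < e -> exists N, forall m n, A m -> A n -> (N <= m)%N -> (N <= n)%N ->
    `|f m - f n| < e.
Definition sincr (h : nat -> nat) := forall m n, (m < n)%N -> (h m < h n)%N.

Lemma sincr_S h : (forall n, (h n < h n.+1)%N) -> sincr h.
Proof.
move=> H m n; elim: n => // n IH; rewrite ltnS leq_eqVlt => /orP[/eqP ->//|].
by move=> /IH /ltn_trans; apply.
Qed.

Lemma sincr_ge h : sincr h -> forall n, (n <= h n)%N.
Proof. by move=> H; elim => // n IH; apply: leq_ltn_trans IH (H _ _ (ltnSn n)). Qed.

Lemma sincr_le h : sincr h -> forall m n, (h m <= h n)%N -> (m <= n)%N.
Proof.
move=> H m n; case: (leqP m n) => // /H hnm; by rewrite leqNgt hnm.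
Qed.

Fixpoint chainA (F : nat * set nat -> set nat) (A : set nat) n :=
  match n with 0 => A | k.+1 => F (k, chainA F A k) end.

Fixpoint hseq (p : set nat * nat -> nat) (C : nat -> set nat) n :=
  match n with 0 => p (C 0%N, 0%N) | k.+1 => p (C k.+1, (hseq p C k).+1) end.

Lemma diag_gen (Q : nat -> set nat -> Prop)
  (Qev : forall k A B, Q k A -> evsub B A -> Q k B)
  (step : forall k A, infset A -> exists A', A' `<=` A /\ infset A' /\ Q k A') :
  forall A, infset A -> exists h, sincr h /\ (forall n, A (h n)) /\ forall k, Q k (range h).
Proof.
move=> A iA0.
have /choice[F HF] : forall kA : nat * set nat, exists A', infset kA.2 ->
   A' `<=` kA.2 /\ infset A' /\ Q kA.1 A'.
  move=> [k B]; have [/(step k)[A' HA']|nB] := pselect (infset B); last first.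
    by exists B.
  by exists A'.
pose C := chainA F A.
have Cinf : forall n, infset (C n).
  by elim => // n IH; have [_ []] := HF (n, C n) IH.
have CS : forall n, C n.+1 `<=` C n.
  by move=> n; have [] := HF (n, C n) (Cinf n).
have CQ : forall n, Q n (C n.+1).
  by move=> n; have [_ []] := HF (n, C n) (Cinf n).
have Cdec : forall i j, (i <= j)%N -> C j `<=` C i.
  move=> i j /subnK <-; elim: (j - i)%N => // d IH.
  by rewrite addSn; apply: subset_trans (CS _) IH.
have /choice[p Hp] : forall BN : set nat * nat, exists m, infset BN.1 -> BN.1 m /\ (BN.2 <= m)%N.
  move=> [B N]; have [/(_ N)[m Hm]|nB] := pselect (infset B); last by exists 0%N.
  by exists m.
pose h := hseq p C.
have hC : forall n, C n (h n).
  by case=> [|n]; [have [] := Hp (C 0%N, 0%N) (Cinf 0%N) | have [] := Hp (C n.+1, (h n).+1) (Cinf n.+1)].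
have hS : sincr h.
  apply: sincr_S => n; by have [] := Hp (C n.+1, (h n).+1) (Cinf n.+1).
exists h; split => //; split; first by move=> n; apply: (Cdec 0%N n) => //.
move=> k; apply: (Qev _ _ _ (CQ k)); exists (h k.+1) => _ [j _ <-] hj.
apply: (Cdec _ _ (sincr_le hS hj)); exact: hC.
Qed.

Lemma enum_inf A : infset A -> exists h, sincr h /\ forall n, A (h n).
Proof.
move=> iA; have [] := @diag_gen (fun _ _ => True) _ _ A iA => //.
  by move=> k B iB; exists B; split => //; split.
by move=> h [? [? _]]; exists h.
Qed.

Lemma bw_set (R : realType) (f : nat -> R) A : infset A -> (exists B, forall n, `|f n| <= B) ->
  exists L, exists A', A' `<=` A /\ infset A' /\
    forall e : R, 0 < e -> exists N, forall m, A' m -> (N <= m)%N -> `|f m - L| < e.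
Proof.
move=> /enum_inf[h [hS hA]] [B HB].
have Hb : bounded_fun (f \o h).
  exists B; split; first by rewrite num_real.
  by move=> x Bx n _; apply: le_trans (HB _) (ltW Bx).
have [phi phiI Hc] := bolzano_weierstrass Hb.
move: Hc; set L := lim _ => HL.
have pS : sincr (h \o phi).
  move=> m n mn; apply: hS; move: mn; rewrite !ltnNge; apply: contra => H; by have <- := phiI n m.
exists L; exists (range (h \o phi)); split; first by move=> _ [j _ <-]; apply: hA.
split.
  move=> N; exists ((h \o phi) N); split; first by exists N.
  exact: sincr_ge.
move=> e e0; move/cvgrPdist_lt: HL => /(_ e e0) [N _ HN].
exists ((h \o phi) N) => _ [j _ <-] hj.
rewrite distrC; apply: HN; exact: (sincr_le pS hj).
Qed.

Lemma cauchy_ev (R : realType) (A B : set nat) (f : nat -> R) :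
  cauchy_on A f -> evsub B A -> cauchy_on B f.
Proof.
move=> cA [N0 HN0] e e0; have [N HN] := cA e e0.
exists (maxn N N0) => m n Bm Bn; rewrite !geq_max => /andP[Nm N0m] /andP[Nn N0n].
by apply: HN => //; apply: HN0.
Qed.

Lemma cauchy_sub (R : realType) (A B : set nat) (f : nat -> R) :
  cauchy_on A f -> B `<=` A -> cauchy_on B f.
Proof. by move=> cA BA; apply: (cauchy_ev cA); exists 0%N => m /BA. Qed.

Lemma lim_cauchy (R : realType) (A : set nat) (f : nat -> R) L :
  (forall e : R, 0 < e -> exists N, forall m, A m -> (N <= m)%N -> `|f m - L| < e) ->
  cauchy_on A f.
Proof.
move=> H e e0; have [N HN] := H (e / 2) (ltac:(lra) : 0 < e / 2).
exists N => m n Am An Nm Nn.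
have h1 := HN m Am Nm; have h2 := HN n An Nn.
have -> : f m - f n = (f m - L) - (f n - L) by rewrite opprB addrA subrK.
apply: le_lt_trans (ler_normB _ _) _.
by rewrite (splitr e); apply: ltrD.
Qed.

Lemma cauchyD (R : realType) (A : set nat) (f g : nat -> R) :
  cauchy_on A f -> cauchy_on A g -> cauchy_on A (fun n => f n + g n).
Proof.
move=> cf cg e e0.
have [N1 H1] := cf (e / 2) (ltac:(lra) : 0 < e / 2).
have [N2 H2] := cg (e / 2) (ltac:(lra) : 0 < e / 2).
exists (maxn N1 N2) => m n Am An; rewrite !geq_max => /andP[N1m N2m] /andP[N1n N2n].
have -> : f m + g m - (f n + g n) = (f m - f n) + (g m - g n) by rewrite opprD addrACA.
apply: le_lt_trans (ler_normD _ _) _.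
by rewrite (splitr e); apply: ltrD; [apply: H1 | apply: H2].
Qed.

Lemma cauchy_cst (R : realType) (A : set nat) (c : R) : cauchy_on A (fun _ => c).
Proof. by move=> e e0; exists 0%N => *; rewrite subrr normr0. Qed.

Lemma diag_count (R : realType) (T : Type) (I : set T) (f : T -> nat -> R) :
  countable I -> (forall i, I i -> exists B, forall n, `|f i n| <= B) ->
  forall A, infset A -> exists A', A' `<=` A /\ infset A' /\ forall i, I i -> cauchy_on A' (f i).
Proof.
move=> /countable_injP[c cinj] fb A iA.
have [] := @diag_gen (fun k B => forall i, I i -> c i = k -> cauchy_on B (f i)) _ _ A iA.
- move=> k B B' HB evB i Ii ci; exact: cauchy_ev (HB i Ii ci) evB.
- move=> k B iB; have [[i [Ii ci]]|ni] := pselect (exists i, I i /\ c i = k); last first.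
    exists B; split => //; split => // i Ii ci; exfalso; apply: ni; by exists i.
  have [L [B' [B'B [iB' HL]]]] := bw_set iB (fb i Ii).
  exists B'; split => //; split => // j Ij cj.
  have -> : j = i by apply: cinj; rewrite ?inE //; rewrite cj ci.
  exact: lim_cauchy HL.
- move=> h [hS [hA hQ]]; exists (range h); split; first by move=> _ [j _ <-].
  split; first by move=> N; exists (h N); split; [exists N | exact: sincr_ge].
  by move=> i Ii; apply: (hQ (c i)).
Qed.

Lemma sep_of_lim (R : realType) (X Y : set nat) (f : nat -> R) La Lb (d : R) :
  0 < d ->
  (forall e : R, 0 < e -> exists N, forall m, X m -> (N <= m)%N -> `|f m - La| < e) ->
  (forall e : R, 0 < e -> exists N, forall m, Y m -> (N <= m)%N -> `|f m - Lb| < e) ->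
  d * 2 <= `|La - Lb| ->
  exists N, forall m n, X m -> Y n -> (N <= m)%N -> (N <= n)%N -> d <= `|f m - f n|.
Proof.
move=> d0 HX HY HL.
have [N1 H1] := HX (d / 2) (ltac:(lra) : 0 < d / 2).
have [N2 H2] := HY (d / 2) (ltac:(lra) : 0 < d / 2).
exists (maxn N1 N2) => m n Xm Yn; rewrite !geq_max => /andP[N1m N2m] /andP[N1n N2n].
have h1 := H1 m Xm N1m; have h2 := H2 n Yn N2n.
have : `|La - Lb| <= `|f m - La| + `|f m - f n| + `|f n - Lb|.
  have -> : La - Lb = - (f m - La) + (f m - f n) + (f n - Lb).
    by ring.
  by apply: le_trans (ler_normD _ _) _; rewrite lerD2r; apply: le_trans (ler_normD _ _) _; rewrite normrN.
move: h1 h2 HL; set a := `|f m - La|; set b := `|f n - Lb|; set c := `|La - Lb|.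
move=> h1 h2 HL h3; lra.
Qed.

Lemma sstarU (R : realType) (G : choiceType) (A B : set G) (f : G -> R) :
  fin_supp f -> A `&` B = set0 -> sstar (A `|` B) f = sstar A f + sstar B f.
Proof.
move=> ff AB; rewrite /sstar fsbig_supp [X in _ = X + _]fsbig_supp.
rewrite [X in _ = _ + X]fsbig_supp setIUl fsbigU0 //.
- by apply: sub_finite_set ff => x [_ /eqP].
- by apply: sub_finite_set ff => x [_ /eqP].
- by move=> x [[Ax _] [Bx _]]; rewrite -AB.
Qed.

Lemma sstar0 (R : realType) (G : choiceType) (f : G -> R) : sstar set0 f = 0.
Proof. exact: fsbig_set0. Qed.

Lemma sstar1 (R : realType) (G : choiceType) (f : G -> R) a : sstar [set a] f = f a.
Proof. exact: fsbig_set1. Qed.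

Lemma norm_sq (R : realType) (G : choiceType) (S : set (set G)) (f : G -> R) M :
  (JSnorm S f <= M%:E)%E -> forall l, disj_family S l ->
  \sum_(u <- l) (sstar u f) ^+ 2 <= M ^+ 2 /\ 0 <= M.
Proof.
move=> HM l dl.
have H : ((Num.sqrt (\sum_(u <- l) (sstar u f) ^+ 2))%:E <= M%:E)%E.
  apply: le_trans HM; apply: ereal_sup_ubound; by exists l.
rewrite lee_fin in H.
have x0 : 0 <= \sum_(u <- l) (sstar u f) ^+ 2 by apply: sumr_ge0 => u _; exact: sqr_ge0.
have s0 := sqrtr_ge0 (\sum_(u <- l) (sstar u f) ^+ 2).
rewrite -(sqr_sqrtr x0); move: H s0; set q := Num.sqrt _ => H s0.
split; last by apply: le_trans H.
by rewrite ler_pXn2r // ?nnegrE //; apply: le_trans H.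
Qed.

Lemma disj_nil (G : Type) (S : set (set G)) : disj_family S [::].
Proof. split; first by move=> u; rewrite in_nil. by move=> i j; rewrite /= ltn0 andbF. Qed.

Lemma disj_cons (G : Type) (S : set (set G)) t ts :
  disj_family S ts -> S t -> (forall u, u \in ts -> t `&` u = set0) ->
  disj_family S (t :: ts).
Proof.
move=> [HS Hd] St Ht; split.
  by move=> u; rewrite in_cons => /orP[/eqP ->|/HS].
move=> [|i] [|j] //=.
- by move=> jlt; apply: Ht; apply: mem_nth.
- by rewrite !ltnS => /andP[ij jlt]; apply: Hd; rewrite ij.
Qed.

Lemma common_N (T : eqType) (P : T -> nat -> Prop)
  (Pmono : forall u N N', P u N -> (N <= N')%N -> P u N') (ts : seq T) :
  (forall u, u \in ts -> exists N, P u N) -> exists N, forall u, u \in ts -> P u N.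
Proof.
elim: ts => [|a ts IH] H; first by exists 0%N => u; rewrite in_nil.
have [N1 H1] := H a (mem_head _ _).
have [N2 H2] := IH (fun u uin => H u (@mem_behead _ (_ :: _) _ uin)).
exists (maxn N1 N2) => u; rewrite in_cons => /orP[/eqP ->|uin].
  by apply: Pmono H1 _; rewrite leq_maxl.
by apply: Pmono (H2 u uin) _; rewrite leq_maxr.
Qed.

Lemma sum_sq (R : realType) (T : eqType) (ts : seq T) (x y : T -> R) (d : R) :
  0 <= d -> (forall u, u \in ts -> d <= `|x u - y u|) ->
  (size ts)%:R * d ^+ 2 <= 2 * \sum_(u <- ts) x u ^+ 2 + 2 * \sum_(u <- ts) y u ^+ 2.
Proof.
move=> d0; elim: ts => [|a ts IH] H; first by rewrite !big_nil /= mul0r !mulr0 addr0.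
rewrite !big_cons /= -add1n natrD mulrDl mul1r.
have IH' := IH (fun u uin => H u (@mem_behead _ (_ :: _) _ uin)).
have Ha := H a (mem_head _ _).
have Hn : `|x a - y a| ^+ 2 = (x a - y a) ^+ 2 by rewrite real_normK // num_real.
move: Ha Hn IH'; set w := `|x a - y a|; set X := \sum_(u <- ts) x u ^+ 2;
set Y := \sum_(u <- ts) y u ^+ 2; set z := (size ts)%:R * d ^+ 2 => Ha Hn IH'.
have : d ^+ 2 <= w ^+ 2 by rewrite ler_pXn2r // ?nnegrE //; apply: le_trans Ha.
rewrite Hn => h; have := sqr_ge0 (x a + y a); nra.
Qed.

Lemma sum_bound (R : realType) (G : Type) (r : seq G) (g : G -> R) M :
  (forall a, `|g a| <= M) -> `|\sum_(a <- r) g a| <= (size r)%:R * M.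
Proof.
move=> H; elim: r => [|a r IH]; first by rewrite big_nil normr0 mul0r.
rewrite big_cons /= -add1n natrD mulrDl mul1r.
by apply: le_trans (ler_normD _ _) _; apply: lerD.
Qed.

Lemma cauchy_ext (R : realType) (A : set nat) (f g : nat -> R) :
  (forall n, f n = g n) -> cauchy_on A f -> cauchy_on A g.
Proof. by move=> fg cf e e0; have [N HN] := cf e e0; exists N => m n; rewrite -!fg; apply: HN. Qed.

Lemma tri3 (R : realType) (a b c a' b' c' : R) :
  `|(a + b + c) - (a' + b' + c')| <= `|a - a'| + `|b - b'| + `|c - c'|.
Proof.
have -> : (a + b + c) - (a' + b' + c') = (a - a') + (b - b') + (c - c') by ring.
by apply: le_trans (ler_normD _ _) _; rewrite lerD2r; apply: ler_normD.
Qed.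

Lemma tri2 (R : realType) (a b L : R) : `|a - b| <= `|a - L| + `|b - L|.
Proof. by rewrite (distrC b); apply: ler_distD. Qed.

From mathcomp Require Import finmap.

Definition goodb (R : realType) (G : choiceType) (S : set (set G)) (phi : nat -> G -> R)
  (e : R) (A : set nat) :=
  forall s, S s -> exists N, forall m n, A m -> A n -> (N <= m)%N -> (N <= n)%N ->
    `|sstar s (phi m) - sstar s (phi n)| <= e.

Lemma lemA (R : realType) (G : choiceType) (S : set (set G)) (HS : CI S)
  (phi : nat -> G -> R) (Hfin : forall n, fin_supp (phi n)) (M : R)
  (HM : forall n, (JSnorm S (phi n) <= M%:E)%E)
  (e : R) (e0 : 0 < e) (A : set nat) (iA : infset A) :
  exists A', A' `<=` A /\ infset A' /\ goodb S phi e A'.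
Proof.
case: HS => -[Hcnt [Hsing _]] Hb [st [Hst Hc]] Hd.
have disj1 : forall s, S s -> disj_family S [:: s].
  move=> s Ss; split; first by move=> u; rewrite inE => /eqP ->.
  by move=> [|i] [|j] //=; rewrite ?ltnS ?ltn0 ?andbF.
have M0 : 0 <= M by have [] := norm_sq (HM 0%N) (disj_nil S).
have Bs : forall s n, S s -> `|sstar s (phi n)| <= M.
  move=> s n Ss; have [] := norm_sq (HM n) (disj1 s Ss).
  rewrite big_seq1 => h _; rewrite ler_norml.
  have := sqr_ge0 (sstar s (phi n) + M); have := sqr_ge0 (sstar s (phi n) - M).
  move: h; set x := sstar s (phi n) => h h1 h2.
  apply/andP; split; nra.
have Ba : forall a n, `|phi n a| <= M.
  by move=> a n; have := Bs [set a] n (Hsing a); rewrite sstar1.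
pose D := \bigcup_(n in [set: nat]) [set a | phi n a != 0].
have cD : countable D.
  apply: bigcup_countable => // n _; exact: finite_set_countable (Hfin n).
have [A0 [A0A [iA0 cA0]]] := diag_count (f := fun a n => phi n a) cD
  (fun a _ => ex_intro _ M (fun n => Ba a n)) iA.
have coord : forall a, cauchy_on A0 (fun n => phi n a).
  move=> a; have [Da|nDa] := pselect (D a); first exact: cA0.
  refine (@cauchy_ext _ _ (fun _ => 0) _ _ _); last exact: cauchy_cst.
  move=> n; apply/esym/eqP/negP => /negP H; apply: nDa; by exists n.
have Fcau : forall F, finite_set F -> forall X, X `<=` A0 ->
    cauchy_on X (fun n => sstar F (phi n)).
  move=> F fF X XA0.
  refine (@cauchy_ext R X (fun n => \sum_(a <- fset_set F) phi n a) (fun n => sstar F (phi n)) _ _).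
    by move=> n; rewrite /sstar fsbig_finite.
  elim: (enum_fset (fset_set F)) => [|a r IH].
    by refine (@cauchy_ext _ _ (fun _ => 0) _ _ _); [move=> n; rewrite big_nil|exact: cauchy_cst].
  refine (@cauchy_ext _ _ (fun n => phi n a + \sum_(a <- r) phi n a) _ _ _).
    by move=> n; rewrite big_cons.
  by apply: cauchyD => //; apply: cauchy_sub (coord a) XA0.
pose U := fun ts : seq (set G) => lunion (map st ts).
have U0 : U [::] = set0 by rewrite /U /lunion /= big_nil.
have Ucons : forall u ts, U (u :: ts) = st u `|` U ts.
  by move=> u ts; rewrite /U /lunion /= big_cons.
have stU : forall u ts, u \in ts -> st u `<=` U ts.
  move=> u; elim => [|w ts IH]; first by rewrite in_nil.
  rewrite in_cons Ucons => /orP[/eqP ->|/IH H]; first by move=> x; left.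
  by move=> x /H; right.
have Dec : forall s ts, S s -> (forall u, u \in ts -> S u) ->
    exists t F, [/\ S t, t `<=` s `\` U ts, finite_set F &
      forall n, sstar s (phi n) = sstar (s `&` U ts) (phi n) + sstar t (phi n) + sstar F (phi n)].
  move=> s ts Ss Hts; have [t [St tsU fin]] := Hc s ts Ss Hts.
  exists t, (s `\` (U ts `|` t)); split => // n.
  have Es : s = (s `&` U ts) `|` (t `|` (s `\` (U ts `|` t))).
    apply/seteqP; split => x.
      move=> sx; have [Ux|nUx] := pselect (U ts x); first by left.
      have [tx|ntx] := pselect (t x); first by right; left.
      by right; right; split => // -[].
    by move=> [[]|[/tsU[]|[]]].
  rewrite {1}Es sstarU //; last first.
    apply/seteqP; split => x // [[_ Ux] [/tsU[_ //]|[_ H]]]; apply: H; by left.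
  rewrite sstarU //; last first.
    apply/seteqP; split => x // [tx [_ H]]; apply: H; by right.
  by rewrite addrA.
have CU : forall ts, (forall u, u \in ts -> S u) -> countable [set s `&` U ts | s in S].
  elim => [|u ts IH] Hts.
    apply: (sub_countable (subset_card_le _) (countable1 set0)).
    by move=> _ [s _ <-]; rewrite U0 setI0.
  have Su : S u by apply: Hts; rewrite mem_head.
  have IH' := IH (fun w win => Hts w (@mem_behead _ (_ :: _) _ win)).
  have c1 : countable [set s `&` st u | s in S].
    apply: (sub_countable (subset_card_le _) (Hd (st u) (Hst u Su).1)).
    by move=> _ [s Ss <-]; exists s => //; rewrite setIC.
  have cP := countableX c1 IH'.
  apply: (sub_countable (subset_card_le _) (sub_countable (card_image_le (fun p => p.1 `|` p.2) _) cP)).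
  move=> _ [s Ss <-]; exists (s `&` st u, s `&` U ts).
    by split; exists s.
  by rewrite Ucons setIUr.
have BU : forall ts, (forall u, u \in ts -> S u) -> forall c,
    [set s `&` U ts | s in S] c -> exists B, forall n, `|sstar c (phi n)| <= B.
  move=> ts Hts _ [s Ss <-].
  have [t [F [St _ fF HD]]] := Dec s ts Ss Hts.
  exists (M + M + (size (enum_fset (fset_set F)))%:R * M) => n.
  have -> : sstar (s `&` U ts) (phi n) = sstar s (phi n) - sstar t (phi n) - sstar F (phi n).
    by rewrite HD; ring.
  rewrite /sstar [X in `|_ - _ - X|]fsbig_finite //.
  apply: le_trans (ler_normB _ _) _; apply: lerD; last exact: sum_bound.
  apply: le_trans (ler_normB _ _) _; apply: lerD; exact: Bs.
apply: contrapT => NA.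
have NG : forall X, X `<=` A0 -> infset X -> ~ goodb S phi e X.
  move=> X XA0 iX gX; apply: NA; exists X; split => //; by move=> x /XA0 /A0A.
have osc : forall X, X `<=` A0 -> infset X -> exists s, S s /\ forall N, exists m n,
    X m /\ X n /\ (N <= m)%N /\ (N <= n)%N /\ e < `|sstar s (phi m) - sstar s (phi n)|.
  move=> X XA0 iX; apply: contrapT => H; apply: (NG X XA0 iX) => s Ss.
  apply: contrapT => H2; apply: H; exists s; split => // N.
  apply: contrapT => H3; apply: H2; exists N => m n Xm Xn Nm Nn.
  rewrite leNgt; apply/negP => H4; apply: H3; exists m, n; do !split => //.
pose d := e / 64.
have d0 : 0 < d by rewrite /d; lra.
pose sep u (X Y : set nat) := exists N, forall m n, X m -> Y n -> (N <= m)%N -> (N <= n)%N ->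
   d <= `|sstar u (phi m) - sstar u (phi n)|.
pose Inv k := exists ts X Y, size ts = k /\ disj_family S ts /\ X `<=` A0 /\ Y `<=` A0 /\
   infset X /\ infset Y /\ (forall u, u \in ts -> sep u X Y) /\
   (forall s, S s -> cauchy_on X (fun n => sstar (s `&` U ts) (phi n)) /\
                    cauchy_on Y (fun n => sstar (s `&` U ts) (phi n))).
have Inv0 : Inv 0%N.
  exists [::], A0, A0; split => //; split; first exact: disj_nil.
  do 4 (split => //); split; first by move=> u; rewrite in_nil.
  move=> s Ss; rewrite U0 setI0; split;
    (refine (@cauchy_ext _ _ (fun _ => 0) _ _ _); [move=> n; by rewrite sstar0 | exact: cauchy_cst]).
have InvS : forall k, Inv k -> Inv k.+1.
  move=> k [ts [X [Y [sz [dts [XA0 [YA0 [iX [iY [Hsep cXY]]]]]]]]]].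
  have Hts : forall u, u \in ts -> S u := dts.1.
  have [s [Ss Hs]] := osc X XA0 iX.
  have [t [F [St tsU fF HD]]] := Dec s ts Ss Hts.
  have e4 : 0 < e / 4 by lra.
  have [N1 H1] := (cXY s Ss).1 _ e4.
  have [N2 H2] := Fcau F fF X XA0 _ e4.
  have osct : forall N, exists m n, X m /\ X n /\ (N <= m)%N /\ (N <= n)%N /\
      e / 2 < `|sstar t (phi m) - sstar t (phi n)|.
    move=> N; have [m [n [Xm [Xn [Nm [Nn Hmn]]]]]] := Hs (maxn N (maxn N1 N2)).
    move: Nm Nn; rewrite !geq_max => /and3P[Nm N1m N2m] /and3P[Nn N1n N2n].
    exists m, n; do 4 (split => //).
    have a1 := H1 m n Xm Xn N1m N1n; have a2 := H2 m n Xm Xn N2m N2n.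
    rewrite !HD in Hmn; have a3 := tri3 (sstar (s `&` U ts) (phi m)) (sstar t (phi m))
      (sstar F (phi m)) (sstar (s `&` U ts) (phi n)) (sstar t (phi n)) (sstar F (phi n)).
    move: a1 a2 a3 Hmn; set p := `|_ - _|; set q := `|_ - _|; set r := `|_ - _|.
    set w := `|_ - _|; move=> a1 a2 a3 Hmn; lra.
  have Bt : exists B, forall n, `|sstar t (phi n)| <= B by exists M => n; apply: Bs.
  have [L1 [X1 [X1X [iX1 HL1]]]] := bw_set iX Bt.
  pose X2 := [set m | X m /\ e / 8 <= `|sstar t (phi m) - L1|].
  have iX2 : infset X2.
    move=> N; apply: contrapT => H.
    have H' : forall m, X m -> (N <= m)%N -> `|sstar t (phi m) - L1| < e / 8.
      move=> m Xm Nm; rewrite ltNge; apply/negP => Hle; apply: H; exists m; by split.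
    have [m [n [Xm [Xn [Nm [Nn Hmn]]]]]] := osct N.
    have a1 := H' m Xm Nm; have a2 := H' n Xn Nn.
    have a3 := tri2 (sstar t (phi m)) (sstar t (phi n)) L1.
    move: a1 a2 a3 Hmn; set p := `|_ - _|; set q := `|_ - _|; set r := `|_ - _|.
    move=> a1 a2 a3 Hmn; lra.
  have [L2 [X3 [X3X2 [iX3 HL2]]]] := bw_set iX2 Bt.
  have gap12 : e / 16 <= `|L1 - L2|.
    have e16 : 0 < e / 16 by lra.
    have [N3 H3] := HL2 _ e16; have [m [X3m Nm]] := iX3 N3.
    have [Xm Hm] := X3X2 m X3m; have a1 := H3 m X3m Nm.
    have a2 : `|sstar t (phi m) - L1| <= `|sstar t (phi m) - L2| + `|L2 - L1|
      by apply: ler_distD.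
    move: Hm a1 a2; rewrite (distrC L2); set p := `|_ - _|; set q := `|_ - _|; set r := `|_ - _|.
    move=> a1 a2 a3; lra.
  have [L3 [Y1 [Y1Y [iY1 HL3]]]] := bw_set iY Bt.
  have [X' [La [X'X [iX' [HLa gap]]]]] : exists X' La, X' `<=` X /\ infset X' /\
      (forall e : R, 0 < e -> exists N, forall m, X' m -> (N <= m)%N -> `|sstar t (phi m) - La| < e)
      /\ d * 2 <= `|La - L3|.
    have [g1|g1] := leP (d * 2) `|L1 - L3|.
      by exists X1, L1.
    exists X3, L2; split; first by move=> m /X3X2[].
    do 2 (split => //).
    have a := ler_distD L3 L1 L2.
    move: a g1 gap12; rewrite (distrC L3) /d; set p := `|_ - _|; set q := `|_ - _|;
      set r := `|_ - _|; move=> a g1 g2; lra.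
  have sept := sep_of_lim d0 HLa HL3 gap.
  pose ts' := t :: ts.
  have Hts' : forall u, u \in ts' -> S u.
    by move=> u; rewrite in_cons => /orP[/eqP ->|/Hts].
  have [X'' [X''X' [iX'' cX'']]] := diag_count (f := fun c n => sstar c (phi n))
    (CU ts' Hts') (BU ts' Hts') iX'.
  have [Y'' [Y''Y1 [iY'' cY'']]] := diag_count (f := fun c n => sstar c (phi n))
    (CU ts' Hts') (BU ts' Hts') iY1.
  exists ts', X'', Y''; split; first by rewrite /= sz.
  split.
    apply: disj_cons => // u uin; apply/seteqP; split => x // [tx ux].
    have [_ nU] := tsU x tx; apply: nU; apply: (stU u ts uin).
    exact: (Hst u (Hts u uin)).2.
  split; first by move=> x /X''X' /X'X /XA0.
  split; first by move=> x /Y''Y1 /Y1Y /YA0.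
  do 2 (split => //); split.
    move=> u; rewrite in_cons => /orP[/eqP ->|uin].
      have [N HN] := sept; exists N => m n Xm Yn; apply: HN; [exact: X''X' | exact: Y''Y1].
    have [N HN] := Hsep u uin; exists N => m n Xm Yn; apply: HN.
      exact: X'X (X''X' _ Xm).
    exact: Y1Y (Y''Y1 _ Yn).
  move=> s0 Ss0; split; [apply: cX'' | apply: cY'']; by exists s0.
have [k0 Hk0] : exists k : nat, 4 * M ^+ 2 < k%:R * d ^+ 2.
  have x0 : 0 <= 4 * M ^+ 2 / d ^+ 2.
    by apply: divr_ge0; [apply: mulr_ge0 => //; exact: sqr_ge0 | exact: sqr_ge0].
  exists (Num.Def.archi_bound (4 * M ^+ 2 / d ^+ 2)).
  by rewrite -ltr_pdivrMr ?exprn_gt0 //; apply: archi_boundP.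
have : Inv k0 by elim: (k0) => // k IH; apply: InvS.
move=> [ts [X [Y [sz [dts [XA0 [YA0 [iX [iY [Hsep _]]]]]]]]]].
pose P := fun u N => forall m n, X m -> Y n -> (N <= m)%N -> (N <= n)%N ->
   d <= `|sstar u (phi m) - sstar u (phi n)|.
have Pm : forall u N N', P u N -> (N <= N')%N -> P u N'.
  move=> u N N' H NN' m n Xm Yn Nm Nn; apply: H => //; exact: leq_trans NN' _.
have [N HN] := @common_N _ P Pm ts Hsep.
have [m [Xm Nm]] := iX N; have [n [Yn Nn]] := iY N.
have h := @sum_sq R _ ts (fun u => sstar u (phi m)) (fun u => sstar u (phi n)) d (ltW d0)
  (fun u uin => HN u uin m n Xm Yn Nm Nn).
have [h1 _] := norm_sq (HM m) dts; have [h2 _] := norm_sq (HM n) dts.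
rewrite sz in h; move: h h1 h2 Hk0.
set z := k0%:R * d ^+ 2; set x1 := \sum_(u <- ts) _; set x2 := \sum_(u <- ts) _.
move=> h h1 h2 Hk0; lra.
Qed.

Lemma goodb_ev (R : realType) (G : choiceType) (S : set (set G)) (phi : nat -> G -> R)
  (e : R) (A B : set nat) : goodb S phi e A -> evsub B A -> goodb S phi e B.
Proof.
move=> gA [N0 HN0] s Ss; have [N HN] := gA s Ss.
exists (maxn N N0) => m n Bm Bn; rewrite !geq_max => /andP[Nm N0m] /andP[Nn N0n].
by apply: HN => //; apply: HN0.
Qed.

Unset Implicit Arguments.

Theorem lemma2p8 (R : realType) (G : choiceType) (S : set (set G))
  (HS : CI S) (phi : nat -> G -> R)
  (Hfin : forall n, fin_supp (phi n))
  (Hbd : exists M : R, forall n, (JSnorm S (phi n) <= M%:E)%E) :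
  exists sigma : nat -> nat,
    (forall m n, (m < n)%N -> (sigma m < sigma n)%N) /\
    (forall s, S s -> cauchy_seq (fun n => sstar s (phi (sigma n)))).
Proof.
have [M HM] := Hbd.
have [h [hS [_ hQ]]] := @diag_gen (fun k B => goodb S phi (k.+1%:R^-1) B)
  (fun k A B gA eB => goodb_ev gA eB)
  (fun k B iB => lemA HS Hfin HM (ltac:(by rewrite invr_gt0 ltr0Sn) : 0 < k.+1%:R^-1 :> R) iB)
  setT (fun N => ex_intro _ N (conj I (leqnn N))).
exists h; split; first exact: hS.
move=> s Ss e e0.
have [k Hk] : exists k : nat, k.+1%:R^-1 < e.
  exists (Num.Def.archi_bound e^-1).
  rewrite invf_plt ?posrE ?ltr0Sn //.
  have ie : 0 < e^-1 by rewrite invr_gt0.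
  apply: lt_le_trans (archi_boundP (ltW ie)) _.
  by rewrite ler_nat.
have [N HN] := hQ k s Ss.
exists N => m n Nm Nn; apply: le_lt_trans Hk.
apply: HN; [by exists m | by exists n | |].
- exact: leq_trans Nm (sincr_ge hS m).
- exact: leq_trans Nn (sincr_ge hS n).
Qed.
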